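(* Let $C=(1,c_2,\dots,c_n)$ be a canonical system whose subsystem $C'=(1,c_2,\dots,c_{n-1})$ is noncanonical, and let $w'$ be the minimum counterexample to $C'$. Then $c_n\le w'$.
   Context: A system is a tuple $C=(c_1,\dots,c_n)$ of integers with $1=c_1<c_2<\dots<c_n$; for $k\le n$, $(c_1,\dots,c_k)$ is a subsystem. For a positive integer $v$, $\mathrm{opt}_C(v)$ is the minimum of $\sum_i x_i$ over $x\in\mathbb{Z}_{\ge0}^n$ with $\sum_i c_ix_i=v$. The greedy representation of $v$ is produced by: for $i=n$ down to $1$, while $c_i\le$ remaining value, take a coin $c_i$. $\mathrm{grd}_C(v)$ is its number of coins. A positive integer $w$ is a counterexample if $\mathrm{opt}_C(w)<\mathrm{grd}_C(w)$; $C$ is canonical if it has none, noncanonical otherwise. *)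

(* Defs.v *)
From mathcomp Require Import all_boot.
Set Implicit Arguments. Unset Strict Implicit. Unset Printing Implicit Defensive.

Definition is_system (C : seq nat) : Prop :=
  C <> [::] /\ head 0 C = 1 /\ sorted ltn C.

Definition value (C x : seq nat) : nat := sumn [seq p.1 * p.2 | p <- zip C x].

Definition represents (C x : seq nat) (v : nat) : Prop :=
  size x = size C /\ value C x = v.

Definition is_opt (C : seq nat) (v k : nat) : Prop :=
  (exists x, represents C x v /\ sumn x = k) /\
  (forall x, represents C x v -> k <= sumn x).

(* greedy: for i = n down to 1, take as many c_i as fit (i.e. v %/ c_i coins) *)
Fixpoint grd_rev (D : seq nat) (v : nat) : nat :=
  match D with
  | [::] => 0
  | c :: D' => v %/ c + grd_rev D' (v %% c)
  end.
Definition grd (C : seq nat) (v : nat) : nat := grd_rev (rev C) v.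

Definition counterexample (C : seq nat) (w : nat) : Prop :=
  0 < w /\ exists k, is_opt C w k /\ k < grd C w.

Definition canonical (C : seq nat) : Prop := forall w, ~ counterexample C w.

Definition min_counterexample (C : seq nat) (w : nat) : Prop :=
  counterexample C w /\ forall u, u < w -> ~ counterexample C u.

(* Main.v *)
Require Import Defs.
From mathcomp Require Import all_boot.

Lemma sumn_rcons' (s : seq nat) a : sumn (rcons s a) = sumn s + a.
Proof. elim: s => [|y s IH] /=; first by rewrite add0n addn0. by rewrite IH addnA. Qed.

Lemma value_rcons (C x : seq nat) c a : size C = size x ->
  value (rcons C c) (rcons x a) = value C x + c * a.
Proof.
move=> H; rewrite /value (zip_rcons _ _ H) map_rcons.
by rewrite sumn_rcons'.
Qed.


Theorem lemma2 (C' : seq nat) (cn w' : nat) :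
  is_system (rcons C' cn) ->
  canonical (rcons C' cn) ->
  ~ canonical C' ->
  min_counterexample C' w' ->
  cn <= w'.
Proof.
move=> _ Hcan _ [[Hw [k [[[x0 [[Hs0 Hv0] Hk0]] Hmin] Hlt]]] _].
rewrite leqNgt; apply/negP => Hlw.
apply: (Hcan w'); split => //; exists k; split; last first.
  by rewrite /grd rev_rcons /= divn_small // modn_small.
split.
  exists (rcons x0 0); split; last by rewrite sumn_rcons' addn0.
  split; first by rewrite !size_rcons Hs0.
  by rewrite value_rcons ?Hs0 // muln0 addn0.
move=> x [Hs Hv].
case/lastP: x Hs Hv => [|x1 a]; first by rewrite size_rcons.
rewrite !size_rcons => /eqP; rewrite eqSS => /eqP Hs.
rewrite value_rcons // => Hv.
have Ha : a = 0.
  case: a Hv => // a Hv; move: Hlw; rewrite -Hv.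
  by rewrite mulnS ltnNge addnCA leq_addr.
subst a; rewrite sumn_rcons' addn0; apply: Hmin; split => //.
by rewrite muln0 addn0 in Hv.
Qed.
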